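(* Let $k_2,h,\alpha,l,L,k>0$ with $L>l$. Then the equation $$-\frac{k_2}{h}\,x=\frac{\tan(\alpha l x)+k\alpha\tan((L-l)x)}{k\alpha-\tan(\alpha l x)\tan((L-l)x)},\qquad x>0,$$ has infinitely many positive solutions $0<x_1<x_2<\cdots<x_n<\cdots$.
   Context: This is the eigenvalue equation arising from separation of variables for heat conduction in a two-material bar $[0,L]$ with interface at $x=l$, Dirichlet condition at $x=0$ and convective (Robin) condition with coefficient $h$ at $x=L$; here $k=k_1/k_2$ is the ratio of the thermal conductivities and $\alpha=\alpha_2/\alpha_1$ the ratio of the square roots of the thermal diffusivities of the two materials. Solutions are understood as points $x>0$ where the right-hand side is defined and equals the left-hand side. *)

(* Defs.v *)
From Stdlib Require Import Reals.
Open Scope R_scope.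

(* x is a solution: the right-hand side is defined at x (both tangents are
   defined, i.e. the cosines are nonzero, and the denominator is nonzero)
   and equals the left-hand side. *)
Definition is_solution (k2 h alpha l L k x : R) : Prop :=
  cos (alpha * l * x) <> 0 /\
  cos ((L - l) * x) <> 0 /\
  k * alpha - tan (alpha * l * x) * tan ((L - l) * x) <> 0 /\
  - (k2 / h) * x =
    (tan (alpha * l * x) + k * alpha * tan ((L - l) * x)) /
    (k * alpha - tan (alpha * l * x) * tan ((L - l) * x)).

(* Main.v *)
Require Import Defs.
From Stdlib Require Import Reals Lra Lia.
From Coquelicot Require Import Coquelicot.
Open Scope R_scope.

Definition gfun c u := (1 - c) * sin u * cos u / (c * cos u ^ 2 + sin u ^ 2).
Definition Th c u := u + atan (gfun c u).
Definition Lam a b c m x := Th c (a * x) + b * x + atan (m * x).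

Lemma w_pos c u : 0 < c -> 0 < c * cos u ^ 2 + sin u ^ 2.
Proof. intros Hc. pose proof (sin2_cos2 u). unfold Rsqr in H. nra. Qed.

Lemma Th_derive c u : 0 < c ->
  is_derive (Th c) u (c / (c^2 * cos u ^ 2 + sin u ^ 2)).
Proof. intros Hc. pose proof (w_pos c u Hc) as Hw.
  assert (Hw2: 0 < c^2 * cos u ^ 2 + sin u ^ 2).
  { pose proof (sin2_cos2 u). unfold Rsqr in H. nra. }
  unfold Th, gfun.
  auto_derive. lra.
  pose proof (sin2_cos2 u) as H1. unfold Rsqr in H1.
  set (s := sin u) in *. set (co := cos u) in *.
  clearbody s co. field_simplify_eq. apply Rminus_diag_uniq. transitivity (c^3*co^2*(s*s+co*co)*((s*s+co*co)-1) + c*s^2*(s*s+co*co)*((s*s+co*co)-1)). ring. rewrite H1. ring.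
  repeat split; nra.
Qed.

Lemma Th_incr c u v : 0 < c -> u < v -> Th c u < Th c v.
Proof.
  intros Hc Huv.
  apply (incr_function (Th c) m_infty p_infty (fun u => c / (c^2 * cos u ^ 2 + sin u ^ 2))); simpl; auto.
  - intros x _ _. apply Th_derive; auto.
  - intros x _ _. assert (0 < c^2 * cos x ^ 2 + sin x ^ 2).
    { pose proof (sin2_cos2 x). unfold Rsqr in H. nra. }
    apply Rlt_gt. apply Rdiv_lt_0_compat; auto.
Qed.

Lemma Th_le c u v : 0 < c -> u <= v -> Th c u <= Th c v.
Proof. intros Hc [H|H]. left; apply Th_incr; auto. subst; lra. Qed.

Lemma Th_shift c u : Th c (u + PI) = Th c u + PI.
Proof. unfold Th, gfun. rewrite neg_sin, neg_cos.
  replace ((1 - c) * - sin u * - cos u / (c * (- cos u) ^ 2 + (- sin u) ^ 2))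
   with ((1 - c) * sin u * cos u / (c * cos u ^ 2 + sin u ^ 2)) by (unfold Rdiv; f_equal; [ring| f_equal; ring]).
  ring.
Qed.

Lemma Th_cos0 c u : cos u = 0 -> Th c u = u.
Proof. intros H. unfold Th, gfun. rewrite H.
  replace ((1 - c) * sin u * 0 / (c * 0 ^ 2 + sin u ^ 2)) with 0 by (unfold Rdiv; ring).
  rewrite atan_0; ring. Qed.

Lemma Th_repr c u : 0 < c -> exists K, 0 < K /\ cos (Th c u) = K * c * cos u /\ sin (Th c u) = K * sin u.
Proof.
  intros Hc. pose proof (w_pos c u Hc) as Hw.
  set (y := atan (gfun c u)).
  assert (Hcy: 0 < cos y).
  { pose proof (atan_bound (gfun c u)). apply cos_gt_0; unfold y; lra. }
  assert (Hsy: sin y = gfun c u * cos y).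
  { pose proof (tan_atan (gfun c u)). fold y in H. unfold tan in H. rewrite <- H. field. lra. }
  pose proof (sin2_cos2 u) as H1. unfold Rsqr in H1.
  exists (cos y / (c * cos u ^ 2 + sin u ^ 2)). split.
  apply Rdiv_lt_0_compat; auto.
  unfold Th. fold y. rewrite cos_plus, sin_plus, Hsy. unfold gfun.
  set (s := sin u) in *. set (co := cos u) in *. clearbody s co.
  split.
  - field_simplify_eq; [|lra]. apply Rminus_diag_uniq.
    transitivity (c * co * cos y * (s*s+co*co - 1)). ring. rewrite H1; ring.
  - field_simplify_eq; [|lra]. apply Rminus_diag_uniq.
    transitivity (s * cos y * (s*s+co*co - 1)). ring. rewrite H1; ring.
Qed.

Lemma Lam_cont a b c m : 0 < c -> continuity (Lam a b c m).
Proof.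
  intros Hc x. apply continuity_pt_filterlim.
  apply (ex_derive_continuous (V:=R_NormedModule)).
  unfold Lam, Th, gfun. auto_derive.
  pose proof (w_pos c (a*x) Hc). lra.
Qed.

Lemma Lam_lower a b c m x : 0 < m -> 0 <= x -> a * x + b * x - PI / 2 < Lam a b c m x.
Proof.
  intros Hm Hx. unfold Lam, Th.
  pose proof (atan_bound (gfun c (a * x))).
  assert (0 <= atan (m * x)).
  { destruct Hx as [Hx|Hx]. left. rewrite <- atan_0. apply atan_increasing. nra.
    subst. rewrite Rmult_0_r, atan_0. lra. }
  lra.
Qed.

Lemma find_root a b c m x0 Lv : 0 < a -> 0 < b -> 0 < c -> 0 < m -> 0 <= x0 ->
  Lam a b c m x0 < Lv -> exists y, x0 < y /\ Lam a b c m y = Lv.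
Proof.
  intros Ha Hb Hc Hm Hx0 HL.
  set (x1 := x0 + (Rabs Lv + PI) / (a + b)).
  assert (Hd: 0 < (Rabs Lv + PI) / (a + b)).
  { apply Rdiv_lt_0_compat. pose proof (Rabs_pos Lv). pose proof PI_RGT_0. lra. lra. }
  assert (Hx1: x0 < x1) by (unfold x1; lra).
  assert (Hab: (a + b) * x1 >= Rabs Lv + PI).
  { unfold x1. rewrite Rmult_plus_distr_l.
    replace ((a + b) * ((Rabs Lv + PI) / (a + b))) with (Rabs Lv + PI) by (field; lra).
    nra. }
  pose proof (Lam_lower a b c m x1 Hm ltac:(lra)).
  pose proof (Rle_abs Lv). pose proof PI_RGT_0.
  destruct (IVT (fun x => Lam a b c m x - Lv) x0 x1) as [z [Hz1 Hz2]].
  - intros x. apply continuity_pt_minus. apply Lam_cont; auto. apply continuity_pt_const. intros u v; auto.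
  - auto.
  - lra.
  - lra.
  - exists z. split. destruct Hz1 as [[H3|H3] _]; auto. subst. lra. lra.
Qed.

Lemma sin_nPI n : sin (IZR n * PI) = 0.
Proof. apply sin_eq_0_1. eauto. Qed.

Lemma good_sol a b c m x n : 0 < c -> cos (a * x) <> 0 -> cos (b * x) <> 0 ->
  Lam a b c m x = IZR n * PI ->
  cos (a * x) <> 0 /\ cos (b * x) <> 0 /\ c - tan (a * x) * tan (b * x) <> 0 /\
  - m * x = (tan (a * x) + c * tan (b * x)) / (c - tan (a * x) * tan (b * x)).
Proof.
  intros Hc Hca Hcb HL. unfold Lam in HL.
  destruct (Th_repr c (a * x) Hc) as [K [HK [HcK HsK]]].
  set (g := atan (m * x)) in *.
  assert (HPsi: Th c (a * x) + b * x = IZR n * PI - g) by lra.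
  assert (Hcg: 0 < cos g).
  { pose proof (atan_bound (m * x)). apply cos_gt_0; unfold g; lra. }
  assert (Hsg: sin g = m * x * cos g).
  { pose proof (tan_atan (m * x)). fold g in H. unfold tan in H. rewrite <- H. field. lra. }
  pose proof (sin_nPI n) as Hsn.
  pose proof (sin2_cos2 (IZR n * PI)) as Hn. unfold Rsqr in Hn. rewrite Hsn in Hn.
  assert (HCn: cos (IZR n * PI) <> 0) by (intro H; rewrite H in Hn; lra).
  assert (E1: cos (Th c (a * x) + b * x) = cos (IZR n * PI) * cos g).
  { rewrite HPsi, cos_minus, Hsn. ring. }
  assert (E2: sin (Th c (a * x) + b * x) = - cos (IZR n * PI) * sin g).
  { rewrite HPsi, sin_minus, Hsn. ring. }
  rewrite cos_plus, HcK, HsK in E1. rewrite sin_plus, HcK, HsK in E2.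
  set (sa := sin (a * x)) in *. set (ca := cos (a * x)) in *.
  set (sb := sin (b * x)) in *. set (cb := cos (b * x)) in *.
  set (Cn := cos (IZR n * PI)) in *.
  assert (HD: c * ca * cb - sa * sb <> 0).
  { intro H. assert (K * (c * ca * cb - sa * sb) = Cn * cos g) by (rewrite <- E1; ring).
    rewrite H in H0. assert (Cn * cos g <> 0). apply Rmult_integral_contrapositive; split; lra. lra. }
  unfold tan. fold sa ca sb cb.
  assert (HD2: c - sa / ca * (sb / cb) <> 0).
  { intro H. apply HD. apply (Rmult_eq_reg_r (/ (ca * cb))).
    rewrite Rmult_0_l. rewrite <- H. field. split; auto.
    apply Rinv_neq_0_compat. apply Rmult_integral_contrapositive; split; auto. }
  split; auto. split; auto. split; auto.
  replace ((sa / ca + c * (sb / cb)) / (c - sa / ca * (sb / cb)))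
      with ((sa * cb + c * ca * sb) / (c * ca * cb - sa * sb)).
  2:{ field_simplify_eq; auto. split; auto. split; auto.
      replace (c * (ca * cb)) with (c * ca * cb) by ring. auto. }
  assert (Hnum: sa * cb + c * ca * sb = - Cn * sin g / K) by (field_simplify_eq; [lra|lra]).
  assert (Hden: c * ca * cb - sa * sb = Cn * cos g / K) by (field_simplify_eq; [lra|lra]).
  rewrite Hnum, Hden, Hsg. field. split; lra.
Qed.

Lemma int_ge1 z : 0 < IZR z -> 1 <= IZR z.
Proof. intros H. apply lt_0_IZR in H. apply IZR_le. lia. Qed.
Lemma int_le1 z : IZR z < 2 -> IZR z <= 1.
Proof. intros H. apply lt_IZR in H. apply IZR_le. lia. Qed.

Lemma diff_int j j' a y y' : 0 < a -> y < y' ->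
  a * y = IZR j * PI + PI / 2 -> a * y' = IZR j' * PI + PI / 2 ->
  exists d, a * y' - a * y = IZR d * PI /\ 1 <= IZR d.
Proof.
  intros Ha Hy H1 H2. exists (j' - j)%Z. rewrite minus_IZR. split. rewrite H1, H2; ring.
  rewrite <- minus_IZR. apply int_ge1. rewrite minus_IZR. pose proof PI_RGT_0.
  assert (0 < a * y' - a * y) by nra.
  assert (0 < (IZR j' - IZR j) * PI) by (rewrite H1, H2 in H0; lra).
  nra.
Qed.

Lemma atan_mono m y y' : 0 < m -> y < y' -> atan (m * y) < atan (m * y').
Proof. intros. apply atan_increasing. nra. Qed.

Lemma AA a b c m y y' L1 : 0 < a -> 0 < b -> 0 < m -> y < y' ->
  cos (a * y) = 0 -> cos (a * y') = 0 ->
  Lam a b c m y = L1 -> Lam a b c m y' = L1 + PI -> False.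
Proof.
  intros Ha Hb Hm Hy C1 C2 L1e L2e. unfold Lam in *. rewrite Th_cos0 in L1e, L2e by auto.
  destruct (cos_eq_0_0 _ C1) as [j Hj]. destruct (cos_eq_0_0 _ C2) as [j' Hj'].
  destruct (diff_int j j' a y y' Ha Hy Hj Hj') as [d [Hd1 Hd2]].
  pose proof (atan_mono m y y' Hm Hy). pose proof PI_RGT_0.
  assert (IZR d * PI >= PI) by nra. assert (b * y < b * y') by nra. lra.
Qed.

Lemma BB a b c m y y' L1 : 0 < b -> 0 < c -> 0 < m -> 0 < a -> y < y' ->
  cos (b * y) = 0 -> cos (b * y') = 0 ->
  Lam a b c m y = L1 -> Lam a b c m y' = L1 + PI -> False.
Proof.
  intros Hb Hc Hm Ha Hy C1 C2 L1e L2e. unfold Lam in *.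
  destruct (cos_eq_0_0 _ C1) as [j Hj]. destruct (cos_eq_0_0 _ C2) as [j' Hj'].
  destruct (diff_int j j' b y y' Hb Hy Hj Hj') as [d [Hd1 Hd2]].
  pose proof (atan_mono m y y' Hm Hy). pose proof PI_RGT_0.
  assert (Th c (a * y) < Th c (a * y')) by (apply Th_incr; auto; nra).
  assert (IZR d * PI >= PI) by nra. lra.
Qed.

Lemma AxA a b c m y y' L1 : 0 < a -> 0 < b -> 0 < m -> y < y' ->
  cos (a * y) = 0 -> cos (a * y') = 0 ->
  Lam a b c m y = L1 -> Lam a b c m y' = L1 + 2 * PI -> b < a.
Proof.
  intros Ha Hb Hm Hy C1 C2 L1e L2e. unfold Lam in *. rewrite Th_cos0 in L1e, L2e by auto.
  destruct (cos_eq_0_0 _ C1) as [j Hj]. destruct (cos_eq_0_0 _ C2) as [j' Hj'].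
  destruct (diff_int j j' a y y' Ha Hy Hj Hj') as [d [Hd1 Hd2]].
  pose proof (atan_mono m y y' Hm Hy). pose proof PI_RGT_0.
  pose proof (atan_bound (m * y)). pose proof (atan_bound (m * y')).
  assert (b * y < b * y') by nra.
  assert (IZR d * PI < 2 * PI) by lra.
  assert (Hd3: IZR d < 2) by nra. apply int_le1 in Hd3.
  assert (Hd4: IZR d = 1) by lra. rewrite Hd4 in Hd1.
  assert (b * y' - b * y < a * y' - a * y) by lra. nra.
Qed.

Lemma BxB a b c m y y' L1 : 0 < a -> 0 < b -> 0 < c -> 0 < m -> y < y' ->
  cos (b * y) = 0 -> cos (b * y') = 0 ->
  Lam a b c m y = L1 -> Lam a b c m y' = L1 + 2 * PI -> a < b.
Proof.
  intros Ha Hb Hc Hm Hy C1 C2 L1e L2e. unfold Lam in *.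
  destruct (cos_eq_0_0 _ C1) as [j Hj]. destruct (cos_eq_0_0 _ C2) as [j' Hj'].
  destruct (diff_int j j' b y y' Hb Hy Hj Hj') as [d [Hd1 Hd2]].
  pose proof (atan_mono m y y' Hm Hy). pose proof PI_RGT_0.
  assert (Th c (a * y) < Th c (a * y')) by (apply Th_incr; auto; nra).
  assert (IZR d * PI < 2 * PI) by lra.
  assert (Hd3: IZR d < 2) by nra. apply int_le1 in Hd3.
  assert (Hd4: IZR d = 1) by lra. rewrite Hd4 in Hd1.
  destruct (Rlt_or_le (a * y' - a * y) PI) as [H5|H5].
  - nra.
  - exfalso. assert (Hs: Th c (a * y + PI) <= Th c (a * y')) by (apply Th_le; auto; lra).
    rewrite Th_shift in Hs. lra.
Qed.

Lemma exists_good a b c m X : 0 < a -> 0 < b -> 0 < c -> 0 < m -> 0 <= X ->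
  exists y n, X < y /\ cos (a * y) <> 0 /\ cos (b * y) <> 0 /\ Lam a b c m y = IZR n * PI.
Proof.
  intros Ha Hb Hc Hm HX. pose proof PI_RGT_0 as HPI.
  set (n0 := up (Lam a b c m X / PI)).
  assert (H0: Lam a b c m X < IZR n0 * PI).
  { destruct (archimed (Lam a b c m X / PI)) as [H1 _]. fold n0 in H1.
    apply (Rmult_lt_compat_r PI) in H1; auto. unfold Rdiv in H1.
    rewrite Rmult_assoc, Rinv_l, Rmult_1_r in H1; lra. }
  destruct (find_root a b c m X _ Ha Hb Hc Hm HX H0) as [y0 [Hy0 L0]].
  assert (H1: Lam a b c m y0 < IZR (n0 + 1) * PI) by (rewrite plus_IZR; lra).
  destruct (find_root a b c m y0 _ Ha Hb Hc Hm ltac:(lra) H1) as [y1 [Hy1 L1]].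
  assert (H2: Lam a b c m y1 < IZR (n0 + 2) * PI) by (rewrite plus_IZR in *; lra).
  destruct (find_root a b c m y1 _ Ha Hb Hc Hm ltac:(lra) H2) as [y2 [Hy2 L2]].
  assert (H3: Lam a b c m y2 < IZR (n0 + 3) * PI) by (rewrite plus_IZR in *; lra).
  destruct (find_root a b c m y2 _ Ha Hb Hc Hm ltac:(lra) H3) as [y3 [Hy3 L3]].
  rewrite plus_IZR in L1, L2, L3.
  assert (E1: Lam a b c m y1 = IZR n0 * PI + PI) by lra.
  assert (E2: Lam a b c m y2 = IZR n0 * PI + PI + PI) by lra.
  assert (E2': Lam a b c m y2 = IZR n0 * PI + 2 * PI) by lra.
  assert (E3: Lam a b c m y3 = IZR n0 * PI + PI + PI + PI) by lra.
  assert (E3': Lam a b c m y3 = IZR n0 * PI + PI + 2 * PI) by lra.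
  destruct (Req_dec (cos (a * y0)) 0) as [A0|A0]; [|destruct (Req_dec (cos (b * y0)) 0) as [B0|B0]];
  [| |exists y0, n0; repeat split; auto; lra].
  all: destruct (Req_dec (cos (a * y1)) 0) as [A1|A1]; [|destruct (Req_dec (cos (b * y1)) 0) as [B1|B1]];
  [| |exists y1, (n0+1)%Z; rewrite plus_IZR; repeat split; auto; lra].
  all: destruct (Req_dec (cos (a * y2)) 0) as [A2|A2]; [|destruct (Req_dec (cos (b * y2)) 0) as [B2|B2]];
  [| |exists y2, (n0+2)%Z; rewrite plus_IZR; repeat split; auto; lra].
  all: destruct (Req_dec (cos (a * y3)) 0) as [A3|A3]; [|destruct (Req_dec (cos (b * y3)) 0) as [B3|B3]];
  [| |exists y3, (n0+3)%Z; rewrite plus_IZR; repeat split; auto; lra].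
  all: exfalso.
  all: first
    [ exact (AA a b c m y0 y1 _ Ha Hb Hm Hy1 A0 A1 L0 E1)
    | exact (AA a b c m y1 y2 _ Ha Hb Hm Hy2 A1 A2 E1 E2)
    | exact (AA a b c m y2 y3 _ Ha Hb Hm Hy3 A2 A3 E2 E3)
    | exact (BB a b c m y0 y1 _ Hb Hc Hm Ha Hy1 B0 B1 L0 E1)
    | exact (BB a b c m y1 y2 _ Hb Hc Hm Ha Hy2 B1 B2 E1 E2)
    | exact (BB a b c m y2 y3 _ Hb Hc Hm Ha Hy3 B2 B3 E2 E3)
    | idtac ].
  all: first
    [ pose proof (AxA a b c m y0 y2 _ Ha Hb Hm ltac:(lra) A0 A2 L0 E2');
      pose proof (BxB a b c m y1 y3 _ Ha Hb Hc Hm ltac:(lra) B1 B3 E1 E3'); lra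
    | pose proof (BxB a b c m y0 y2 _ Ha Hb Hc Hm ltac:(lra) B0 B2 L0 E2');
      pose proof (AxA a b c m y1 y3 _ Ha Hb Hm ltac:(lra) A1 A3 E1 E3'); lra ].
Qed.
From Stdlib Require Import ClassicalEpsilon.

Theorem theorem1 (k2 h alpha l L k : R) :
  0 < k2 -> 0 < h -> 0 < alpha -> 0 < l -> 0 < L -> 0 < k -> l < L ->
  exists xs : nat -> R,
    (forall n, 0 < xs n) /\
    (forall n, xs n < xs (S n)) /\
    (forall n, is_solution k2 h alpha l L k (xs n)).
Proof.
  intros Hk2 Hh Hal Hl HL Hk HlL.
  assert (Ha: 0 < alpha * l) by nra.
  assert (Hb: 0 < L - l) by lra.
  assert (Hc: 0 < k * alpha) by nra.
  assert (Hm: 0 < k2 / h) by (apply Rdiv_lt_0_compat; auto).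
  assert (Hf: forall X : R, exists y, Rmax X 0 < y /\ is_solution k2 h alpha l L k y).
  { intros X. destruct (exists_good (alpha * l) (L - l) (k * alpha) (k2 / h) (Rmax X 0) Ha Hb Hc Hm
      ltac:(apply Rmax_r)) as [y [n [H1 [H2 [H3 H4]]]]].
    exists y. split; auto. unfold is_solution.
    exact (good_sol (alpha * l) (L - l) (k * alpha) (k2 / h) y n Hc H2 H3 H4). }
  set (f := fun X => proj1_sig (constructive_indefinite_description _ (Hf X))).
  assert (Hfp: forall X, Rmax X 0 < f X /\ is_solution k2 h alpha l L k (f X)).
  { intros X. unfold f. destruct (constructive_indefinite_description _ (Hf X)); auto. }
  exists (fix xs n := match n with O => f 0 | S n' => f (xs n') end).
  split; [|split].
  - intros [|n]; simpl; (eapply Rle_lt_trans; [|apply (proj1 (Hfp _))]); apply Rmax_r.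
  - intros n. simpl. eapply Rle_lt_trans; [apply Rmax_l|apply (proj1 (Hfp _))].
  - intros [|n]; simpl; apply (proj2 (Hfp _)).
Qed.
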